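(* Let $n\ge2$ and let $a,b$ be positive integers with $a<n-1$ and $b<n$. For all $l\in\mathcal{Q}_a$ and $r\in\mathcal{Q}_b$, $$\sum_{q\in\mathcal{Q}_n}\ \sum_{q'\in\mathcal{Q}_{n-1}}\mathbb{P}_q^{q'}\Big(\big\{(L_i,R_i)_{i=0}^{n-1}: L_a=l,\ R_{n-b-1}=r\big\}\Big)\ \le\ 12^{\,2n-b-a-1}.$$
   Context: $\mathcal{Q}_k$ denotes the set of rooted quadrangulations of the sphere with $k$ faces, with the convention that $\mathcal{Q}_0=\{\to\}$ consists of the rooted map with one edge and two vertices; $|\mathcal{Q}_k|=\frac{2\cdot 3^k(2k)!}{k!\,(k+2)!}$, so in particular $|\mathcal{Q}_{k+1}|\le 12|\mathcal{Q}_k|$ for all $k\ge0$. For each $k\ge1$, $g_k:\mathcal{Q}_k\times\mathcal{Q}_{k-1}\to\mathbb{R}_{\ge0}$ is a function such that $\sum_{q'\in\mathcal{Q}_{k-1}}g_k(q,q')=1$ for every $q\in\mathcal{Q}_k$ and $\sum_{q\in\mathcal{Q}_k}g_k(q,q')=|\mathcal{Q}_k|/|\mathcal{Q}_{k-1}|$ for every $q'\in\mathcal{Q}_{k-1}$ (and $g_k(q,q')=0$ unless $q'$ is obtained from $q$ by collapsing a face). For $q\in\mathcal{Q}_n$ and $q'\in\mathcal{Q}_{n-1}$, $\mathbb{P}_q^{q'}$ is the probability measure on the set of sequences $(L_i,R_i)_{i=0}^{n-1}$ with $L_i\in\mathcal{Q}_i$ and $R_i\in\mathcal{Q}_{n-1-i}$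 given by $$\mathbb{P}_q^{q'}\big((L_i,R_i)_{i=0}^{n-1}\big)=g_n(q,R_0)\,1_{L_{n-1}=q'}\prod_{i=0}^{n-2}g_{n-i-1}(R_i,R_{i+1})\,g_{i+1}(L_{i+1},L_i).$$ *)

(* Defs.v *)
From HB Require Import structures.
From mathcomp Require Import all_boot all_order all_algebra.
Set Implicit Arguments. Unset Strict Implicit. Unset Printing Implicit Defensive.
Import Order.TTheory GRing.Theory Num.Theory.
Local Open Scope ring_scope.

Section QDefs.
Variable R : realFieldType.
(* Q k : the finite set of rooted quadrangulations with k faces *)
Variable Q : nat -> finType.
(* g m = g_{m+1} : Q_{m+1} x Q_m -> R *)
Variable g : forall m : nat, Q m.+1 -> Q m -> R.

Definition heq (k m : nat) (x : Q k) (y : Q m) : bool :=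
  match k =P m with
  | ReflectT e => eq_rect k Q x m e == y
  | ReflectF _ => false
  end.

Definition gh (k m : nat) (x : Q k) (y : Q m) : R :=
  match m.+1 =P k with
  | ReflectT e => g (eq_rect_r Q x e) y
  | ReflectF _ => 0
  end.

(* sequences (L_i, R_i)_{i=0}^{n-1} with L_i in Q_i, R_i in Q_{n-1-i} *)
Definition QSeq (n : nat) :=
  {dffun forall i : 'I_n, (Q i * Q (n - 1 - i))%type}.

Definition Pqq (n : nat) (q : Q n) (q' : Q n.-1) (s : QSeq n) : R :=
  (\prod_(j : 'I_n | val j == 0%N) gh q (s j).2)
  * ([forall i : 'I_n, (val i == n - 1)%N ==> heq (s i).1 q'])%:R
  * \prod_(i : 'I_n) \prod_(j : 'I_n | val j == (val i).+1)
       (gh (s i).2 (s j).2 * gh (s j).1 (s i).1).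
End QDefs.

(* Main.v *)
Require Import Defs.
From HB Require Import structures.
From mathcomp Require Import all_boot all_order all_algebra zify ring lra.
Import Order.TTheory GRing.Theory Num.Theory.
Local Open Scope ring_scope.
Section Nat.
Local Open Scope nat_scope.
Definition X k := (2 * 3 ^ k * (2 * k)`! %/ (k`! * (k.+2)`!))%N.
Lemma X_rec k : X k.+1 = ((2*3^k*(2*k)`!) * (6*(2*k+1))) %/ (k`!*(k.+2)`! * (k+3)).
Proof.
rewrite /X.
have -> : (2 * k.+1 = (2*k).+2)%N by lia.
rewrite !factS expnS.
have -> : (k.+3 = k + 3)%N by lia.
rewrite -[in RHS](@divnMr k.+1) //.
congr (_ %/ _).
all: apply/eqP; rewrite -(eqr_nat int) !(natrM, natrD, natrX, mulrS) ; apply/eqP; ring.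
Qed.
Lemma X_pos k : (k.+1 <= X k)%N.
Proof.
elim: k => [|k IH]; first by [].
rewrite X_rec.
set N := (2 * 3 ^ k * (2 * k)`!)%N.
set D := (k`! * (k.+2)`!)%N.
have D0 : (0 < D)%N by rewrite muln_gt0 !fact_gt0.
have ND : (X k * D <= N)%N by rewrite /X -/N -/D leq_trunc_div.
rewrite leq_divRL; last by rewrite muln_gt0 D0; lia.
apply: (@leq_trans (X k * D * (6 * (2 * k + 1)))); last by rewrite leq_mul2r ND orbT.
have : (k.+2 * (D * (k + 3)) <= k.+1 * D * (6 * (2 * k + 1)))%N.
  rewrite -!mulnA [X in (_ <= _ * X)%N]mulnC -!mulnA [X in (_ <= _ * (_ * X))%N]mulnC.
  nia.
move=> H; apply: (leq_trans H); rewrite leq_mul2r leq_mul2r IH; lia.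
Qed.
Lemma X_ratio k : (X k.+1 <= 12 * X k)%N.
Proof.
have IH := X_pos k.
rewrite X_rec.
set N := (2 * 3 ^ k * (2 * k)`!)%N.
set D := (k`! * (k.+2)`!)%N.
have D0 : (0 < D)%N by rewrite muln_gt0 !fact_gt0.
have ND : (N < (X k).+1 * D)%N by rewrite /X -/N -/D ltn_ceil.
rewrite -ltnS ltn_divLR; last by rewrite muln_gt0 D0; lia.
apply: (@leq_trans ((X k).+1 * D * (6 * (2 * k + 1)))).
  by rewrite ltn_pmul2r //; lia.
nia.
Qed.

End Nat.

Section Chain.
Variable R : realFieldType.
Variable T : finType.
Variable A : T -> T -> R.
Variable e : T -> R.

Fixpoint W (x : T) (s : seq T) : R := if s is y :: s' then A x y * W y s' else e x.

Lemma sum_tupleS m (P : pred (m.+1.-tuple T)) (F : (m.+1).-tuple T -> R) :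
  \sum_(t | P t) F t = \sum_y \sum_(t : m.-tuple T | P (cons_tuple y t)) F (cons_tuple y t).
Proof.
rewrite pair_big_dep /=.
rewrite (reindex (fun p : T * m.-tuple T => cons_tuple p.1 p.2)) //=.
exists (fun t => (thead t, behead_tuple t)) => [[y t] _ | t _] /=.
  by congr (_, _); apply: val_inj.
by rewrite [t in RHS]tuple_eta.
Qed.

Lemma sum_tuple0 (F : 0.-tuple T -> R) : \sum_(t : 0.-tuple T) F t = F [tuple].
Proof. by rewrite (big_pred1 [tuple]) // => t; apply/esym/eqP; exact: tuple0. Qed.

Variables (Cf Cb E : R).
Hypothesis A_ge0 : forall x y, 0 <= A x y.
Hypothesis e_ge0 : forall x, 0 <= e x.
Hypothesis e_le : forall x, e x <= E.
Hypothesis fwd : forall x, \sum_y A x y <= Cf.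
Hypothesis bwd : forall y, \sum_x A x y <= Cb.
Hypothesis Cf0 : 0 <= Cf.
Hypothesis Cb0 : 0 <= Cb.

Lemma W_ge0 x s : 0 <= W x s.
Proof. by elim: s x => [|y s IH] x /=; rewrite ?mulr_ge0. Qed.

Lemma S1 m x : \sum_(t : m.-tuple T) W x t <= Cf ^+ m * E.
Proof.
elim: m x => [|m IH] x; first by rewrite sum_tuple0 /= expr0 mul1r.
rewrite (sum_tupleS _ xpredT) /=.
apply: (@le_trans _ _ (\sum_y A x y * (Cf ^+ m * E))).
  apply: ler_sum => y _; rewrite -mulr_sumr; apply: ler_wpM2l => //; exact: IH.
have E0 : 0 <= E := le_trans (e_ge0 x) (e_le x).
by rewrite -mulr_suml exprS -mulrA ler_wpM2r // mulr_ge0 // exprn_ge0.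
Qed.

Lemma chain_bound p : forall m (H : R) (h : T -> R) (x : T), (p <= m)%N ->
  0 <= H -> (forall y, 0 <= h y) -> (forall y, h y <= H) ->
  \sum_y \sum_(t : m.-tuple T | nth y (y :: t) p == x) h y * W y t
    <= H * Cb ^+ p * Cf ^+ (m - p) * E.
Proof.
elim: p => [|p IH] m H h x hpm H0 h0 hH.
  rewrite (bigD1 x) //= [X in _ + X]big1 ?addr0; last first.
    move=> y; rewrite ?andTb => nyx; rewrite big_pred0 // => t /=; exact: negbTE nyx.
  under eq_bigl => t do rewrite /= eqxx.
  rewrite -mulr_sumr expr0 mulr1 subn0 -mulrA.
  apply: ler_pM => //; first by rewrite sumr_ge0 // => t _; exact: W_ge0.
  exact: S1.
case: m hpm => // m hpm.
under eq_bigr => y _ do rewrite (sum_tupleS _ (fun t => nth y (y :: t) p.+1 == x)) /=.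
have E1 : forall y, \sum_z \sum_(t : m.-tuple T | nth y (y :: cons_tuple z t) p.+1 == x) h y * W y (cons_tuple z t) = \sum_z \sum_(t : m.-tuple T | nth z (z :: t) p == x) h y * A y z * W z t.
  move=> y; apply: eq_bigr => z _; apply: eq_big => [t|t _] /=; last by rewrite mulrA.
  by rewrite (set_nth_default z) //= size_tuple.
under eq_bigr => y _ do rewrite E1.
rewrite exchange_big /=.
under eq_bigr => z _ do rewrite exchange_big /=.
under eq_bigr => z _ do under eq_bigr => t _ do rewrite -mulr_suml.
have := IH m (H * Cb) (fun z => \sum_y h y * A y z) x hpm.
rewrite subSS exprS !mulrA; apply.
- exact: mulr_ge0.
- by move=> z; rewrite sumr_ge0 // => y _; rewrite mulr_ge0.
- move=> z; apply: (@le_trans _ _ (\sum_y H * A y z)).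
    by apply: ler_sum => y _; rewrite ler_wpM2r.
  by rewrite -mulr_sumr ler_wpM2l.
Qed.

Lemma W_iota (f : nat -> T) j : forall k, W (f k) (map f (iota k.+1 j)) =
  (\prod_(i < j) A (f (k + i)%N) (f (k + i).+1)) * e (f (k + j)%N).
Proof.
elim: j => [|j IH] k; first by rewrite big_ord0 mul1r addn0.
rewrite /= IH big_ord_recl addn0 mulrA; congr (_ * _ * e (f _)); last by rewrite addSnnS.
by apply: eq_bigr => i _; rewrite addSnnS.
Qed.
End Chain.
Arguments W {R T} A e x s.

Section Main.
Variable R : realFieldType.
Variable Q : nat -> finType.
Variable g : forall m : nat, Q m.+1 -> Q m -> R.
Hypothesis g_ge0 : forall m (q : Q m.+1) (q' : Q m), 0 <= g _ q q'.
Hypothesis g_row : forall m (q : Q m.+1), \sum_(q' : Q m) g _ q q' = 1.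
Hypothesis g_col : forall m (q' : Q m),
     \sum_(q : Q m.+1) g _ q q' = #|Q m.+1|%:R / #|Q m|%:R.
Hypothesis ratio : forall k, (#|Q k.+1| <= 12 * #|Q k|)%N.

Lemma gh_ge0 k j (x : Q k) (y : Q j) : 0 <= gh g x y.
Proof. by rewrite /gh; case: eqP. Qed.

Lemma row_gh k j (x : Q k) : \sum_(y : Q j) gh g x y = if j.+1 == k then 1 else 0.
Proof.
rewrite /gh; case: eqP => [e|_]; first by rewrite g_row.
by rewrite big1.
Qed.

Lemma col_gh k j (y : Q j) : \sum_(x : Q k) gh g x y <= 12 /\ (k != j.+1 -> \sum_(x : Q k) gh g x y = 0).
Proof.
rewrite /gh; case: eqP => e; last by rewrite big1 // ler0n.
subst k; split; last by rewrite eqxx.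
rewrite /= g_col.
have [->|c0] := eqVneq #|Q j| 0%N; first by rewrite invr0 mulr0 ler0n.
rewrite ler_pdivrMr ?ltr0n ?lt0n //.
have := ratio j; rewrite -(ler_nat R) natrM => H; apply: (le_trans H).
by rewrite lexx.
Qed.

Lemma heq_sum k j (x : Q k) : \sum_(y : Q j) (heq x y)%:R <= 1 :> R.
Proof.
rewrite /heq; case: eqP => e; last by rewrite big1.
rewrite (bigD1 (eq_rect k Q x j e)) //= eqxx big1 ?addr0 // => y ny.
by rewrite eq_sym (negbTE ny).
Qed.

Lemma single N (c : nat) (f : 'I_N -> R) (B : R) : 0 <= B ->
  (forall i, val i != c -> f i = 0) -> (forall i, f i <= B) -> \sum_i f i <= B.
Proof.
move=> B0 f0 fB.
case: (ltnP c N) => cN.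
  rewrite (bigD1 (Ordinal cN)) //= [X in _ + X]big1 ?addr0 //.

rewrite big1 // => i _; apply: f0; apply: contraTneq cN => <-; by rewrite -ltnNge ltn_ord.
Qed.

Variable m : nat.
Definition U := {k : 'I_m.+3 & Q k}.
Definition tg {k : nat} (pk : (k < m.+3)%N) (x : Q k) : U :=
  @Tagged _ (Ordinal pk) (fun i : 'I_m.+3 => Q i) x.
Definition G (u v : U) : R := gh g (tagged u) (tagged v).

Lemma sumU (F : U -> R) : \sum_(v : U) F v = \sum_(i : 'I_m.+3) \sum_(y : Q i) F (Tagged (fun i : 'I_m.+3 => Q i) y).
Proof. by rewrite sig_big_dep /=; apply: eq_bigr => -[i y]. Qed.

Lemma G_ge0 u v : 0 <= G u v.
Proof. exact: gh_ge0. Qed.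

Lemma G_row u : \sum_v G u v <= 1.
Proof.
rewrite sumU; apply: (@single _ (tag u).-1) => //.
- move=> i ni; rewrite /G /= row_gh; case: eqP => // ei.
  by move: ni; rewrite -ei /= eqxx.
- by move=> i; rewrite /G /= row_gh; case: eqP.
Qed.

Lemma G_col v : \sum_u G u v <= 12.
Proof.
rewrite sumU; apply: (@single _ (tag v).+1) => //.
- by move=> i ni; rewrite /G /=; case: (@col_gh i _ (tagged v)) => _ ->.
- by move=> i; rewrite /G /=; case: (@col_gh i _ (tagged v)).
Qed.

Lemma tg_heq k j (pk : (k < m.+3)%N) (pj : (j < m.+3)%N) (x : Q k) (y : Q j) :
  heq x y -> tg pk x = tg pj y.
Proof.
rewrite /heq; case: eqP => // e; subst j => /= /eqP ->.
by rewrite /tg (bool_irrelevance pk pj).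
Qed.

Lemma tg_inj k (pk : (k < m.+3)%N) (x y : Q k) : tg pk x = tg pk y -> x = y.
Proof.
move=> exy.
have := tagged_asE (u := tg pk x) y.
rewrite -/(tg pk y) -exy.
by rewrite (tagged_asE (u := tg pk x) x).
Qed.


Lemma ltR (i : 'I_m.+2) : (m.+2 - 1 - i < m.+3)%N.
Proof. lia. Qed.
Lemma ltL (i : 'I_m.+2) : (i < m.+3)%N.
Proof. have := ltn_ord i; lia. Qed.

Definition eR (s : QSeq Q m.+2) (i : 'I_m.+2) : U := tg (ltR i) (s i).2.
Definition eL (s : QSeq Q m.+2) (i : 'I_m.+2) : U := tg (ltL i) (s i).1.
Definition tupR s : (m.+1).-tuple U := [tuple eR s (lift ord0 j) | j < m.+1].
Definition tupL s : (m.+1).-tuple U := [tuple eL s (lift ord0 j) | j < m.+1].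
Definition psi s : (U * (m.+1).-tuple U) * (U * (m.+1).-tuple U) :=
  ((eR s ord0, tupR s), (eL s ord0, tupL s)).

Lemma psi_inj : injective psi.
Proof.
move=> s1 s2 E.
have e1 : eR s1 ord0 = eR s2 ord0 := congr1 (fun p => p.1.1) E.
have t1 : tupR s1 = tupR s2 := congr1 (fun p => p.1.2) E.
have e2 : eL s1 ord0 = eL s2 ord0 := congr1 (fun p => p.2.1) E.
have t2 : tupL s1 = tupL s2 := congr1 (fun p => p.2.2) E.
have hR : forall i, eR s1 i = eR s2 i.
  move=> i; case: (unliftP ord0 i) => [j ->|->] //.
  by have := congr1 (fun t => tnth t j) t1; rewrite !tnth_mktuple.
have hL : forall i, eL s1 i = eL s2 i.
  move=> i; case: (unliftP ord0 i) => [j ->|->] //.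
  by have := congr1 (fun t => tnth t j) t2; rewrite !tnth_mktuple.
apply/ffunP => i; apply: injective_projections.
  exact: tg_inj (hL i).
exact: tg_inj (hR i).
Qed.

Definition rho (f : 'I_m.+2 -> U) (k : nat) : U := f (inord k).

Lemma val_tupX (f : 'I_m.+2 -> U) :
  tval [tuple f (lift ord0 j) | j < m.+1] = map (rho f) (iota 1 m.+1).
Proof.
rewrite (_ : tval _ = map (fun j => f (lift ord0 j)) (enum 'I_m.+1)); last by [].
rewrite (@eq_map _ _ _ (fun j : 'I_m.+1 => rho f (val j).+1)); last first.
  move=> j /=; rewrite /rho; congr f; apply: val_inj.
  by rewrite /= inordK // ltnS.
rewrite (map_comp (fun k => rho f k.+1) val) val_enum_ord.
by rewrite -[1%N]/(1+0)%N iotaDl -map_comp.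
Qed.

Lemma rho0 (f : 'I_m.+2 -> U) : f ord0 = rho f 0.
Proof. by rewrite /rho; congr f; apply: val_inj; rewrite /= inordK. Qed.

Lemma rhomax (f : 'I_m.+2 -> U) : f ord_max = rho f m.+1.
Proof. by rewrite /rho; congr f; apply: val_inj; rewrite /= inordK. Qed.

Lemma prod_succ N (F : 'I_N.+1 -> 'I_N.+1 -> R) :
  \prod_(i : 'I_N.+1) \prod_(j : 'I_N.+1 | val j == (val i).+1) F i j =
  \prod_(k < N) F (inord k) (inord k.+1).
Proof.
rewrite big_ord_recr /= [X in _ * X]big_pred0 ?mulr1; last first.
  by move=> j; rewrite /= eqn_leq andbC leqNgt ltn_ord.
apply: eq_bigr => i _.
rewrite (big_pred1 (inord i.+1)); last first.
  by move=> j; rewrite /= -val_eqE /= inordK // ltnS.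
by congr F; apply: val_inj; rewrite /= inordK // ltnS ltnW.
Qed.

Lemma W_tup (A : U -> U -> R) (e : U -> R) (f : 'I_m.+2 -> U) :
  W A e (f ord0) [tuple f (lift ord0 j) | j < m.+1] =
  (\prod_(i < m.+1) A (rho f i) (rho f i.+1)) * e (f ord_max).
Proof.
rewrite val_tupX rho0 W_iota add0n -rhomax.
by congr (_ * _); apply: eq_bigr => i _; rewrite add0n.
Qed.

Definition hR (v : U) : R := \sum_(q : Q m.+2) gh g q (tagged v).
Definition eLf (u : U) : R := \sum_(q' : Q m.+1) (heq (tagged u) q')%:R.
Definition GT (u v : U) := G v u.
Definition XR (z : U * (m.+1).-tuple U) := hR z.1 * W G (fun _ => 1) z.1 z.2.
Definition XL (z : U * (m.+1).-tuple U) := 1 * W GT eLf z.1 z.2.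
Definition Psi (z : (U * (m.+1).-tuple U) * (U * (m.+1).-tuple U)) : R :=
  XR z.1 * XL z.2.

Lemma Phi_eq s : \sum_(q : Q m.+2) \sum_(q' : Q m.+1) Pqq g q q' s = Psi (psi s).
Proof.
rewrite /Pqq.
have E1 : forall q : Q m.+2, \prod_(j : 'I_m.+2 | val j == 0%N) gh g q (s j).2 = gh g q (s ord0).2.
  by move=> q; rewrite (big_pred1 ord0) // => j; rewrite /= -val_eqE.
have E2 : forall q' : Q m.+1, [forall i : 'I_m.+2, (val i == m.+2 - 1)%N ==> heq (s i).1 q'] = heq (s ord_max).1 q'.
  move=> q'; apply/forallP/idP => [H | H i].
    by have /implyP := H ord_max; apply; rewrite /= subn1.
  apply/implyP => /eqP ei.
  have -> : i = ord_max by apply: val_inj; rewrite ei /= subn1.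
  exact: H.
have E3 : \prod_(i : 'I_m.+2) \prod_(j : 'I_m.+2 | val j == (val i).+1)
      (gh g (s i).2 (s j).2 * gh g (s j).1 (s i).1) =
    (\prod_(k < m.+1) G (rho (eR s) k) (rho (eR s) k.+1)) *
    (\prod_(k < m.+1) GT (rho (eL s) k) (rho (eL s) k.+1)).
  rewrite -big_split /=.
  transitivity (\prod_(i : 'I_m.+2) \prod_(j : 'I_m.+2 | val j == (val i).+1)
     (fun i j => G (eR s i) (eR s j) * G (eL s j) (eL s i)) i j).
    by apply: eq_bigr => i _; apply: eq_bigr => j _.
  rewrite prod_succ; apply: eq_bigr => i _; by [].
under eq_bigr => q _ do under eq_bigr => q' _ do rewrite E1 E2 E3.
under eq_bigr => q _ do rewrite -big_distrl /= -big_distrr /=.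
rewrite -big_distrl /= -big_distrl /=.
rewrite /Psi /XR /XL /psi /tupR /tupL !W_tup.
have H : forall a b c d : R, a * b * (c * d) = a * c * (d * b) by move=> *; ring.
by rewrite H mulr1 mul1r.
Qed.
Lemma sum_inj_le (I J : finType) (f : I -> J) (P : pred I) (Pz : pred J) (F : J -> R) :
  injective f -> (forall j, 0 <= F j) -> (forall i, P i -> Pz (f i)) ->
  \sum_(i | P i) F (f i) <= \sum_(j | Pz j) F j.
Proof.
move=> finj F0 PPz.
have -> : \sum_(i | P i) F (f i) = \sum_(j in f @: [set i | P i]) F j.
  rewrite big_imset /=; last by move=> x y _ _; apply: finj.
  by apply: eq_bigl => i; rewrite inE.
rewrite [X in _ <= X](bigID (mem (f @: [set i | P i]))) /=.
have -> : \sum_(j in f @: [set i | P i]) F j = \sum_(j | Pz j && (j \in f @: [set i | P i])) F j.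
  apply: eq_bigl => j; case: (boolP (j \in f @: [set i | P i])) => [jS|]; rewrite ?andbT ?andbF //.
  by case/imsetP: jS => i; rewrite inE => Pi ->; rewrite PPz.
by rewrite lerDl sumr_ge0.
Qed.

Lemma hR_ge0 v : 0 <= hR v.
Proof. by rewrite sumr_ge0 // => q _; exact: gh_ge0. Qed.
Lemma hR_le v : hR v <= 12.
Proof. by case: (@col_gh m.+2 _ (tagged v)). Qed.
Lemma eLf_ge0 u : 0 <= eLf u.
Proof. by rewrite sumr_ge0 // => q _; exact: ler0n. Qed.
Lemma eLf_le u : eLf u <= 1.
Proof. exact: heq_sum. Qed.

Lemma main_bound (a b : nat) (l : Q a) (r : Q b) (ha : (0 < a)%N) (hb : (0 < b)%N)
  (han : (a < m.+1)%N) (hbn : (b < m.+2)%N) :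
  \sum_(q : Q m.+2) \sum_(q' : Q m.+1)
     \sum_(s : QSeq Q m.+2 | [forall i : 'I_m.+2, (val i == a) ==> heq (s i).1 l]
                          && [forall i : 'I_m.+2, (val i == m.+2 - b - 1)%N ==> heq (s i).2 r])
        Pqq g q q' s
  <= (12%:R : R) ^+ (2 * m.+2 - b - a - 1).
Proof.
under eq_bigr => q _ do rewrite exchange_big /=.
rewrite exchange_big /=.
under eq_bigr => s _ do rewrite Phi_eq.
have pbR : (b < m.+3)%N by lia.
have paL : (a < m.+3)%N by lia.
set xR := tg pbR r; set xL := tg paL l.
set pR := (m.+2 - b - 1)%N.
have pRm : (pR < m.+2)%N by rewrite /pR; lia.
set pinR := fun z1 : U * (m.+1).-tuple U => nth z1.1 (z1.1 :: z1.2) pR == xR.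
set pinL := fun z2 : U * (m.+1).-tuple U => nth z2.1 (z2.1 :: z2.2) a == xL.
apply: (le_trans (@sum_inj_le _ _ psi _ (fun z => pinR z.1 && pinL z.2) Psi psi_inj _ _)).
- by move=> z; rewrite /Psi /XR /XL mulr_ge0 ?mulr_ge0 ?hR_ge0 ?ler01 ?W_ge0 //;
    [exact: G_ge0 | move=> x y; exact: G_ge0 | exact: eLf_ge0].
- move=> s /andP[/forallP HL /forallP HR]; apply/andP; split.
  + rewrite /pinR /psi /= /tupR.
    rewrite (_ : eR s ord0 :: _ = map (rho (eR s)) (iota 0 m.+2)); last by rewrite val_tupX rho0.
    rewrite (nth_map 0%N) ?size_iota; last by lia.
    rewrite nth_iota; last by lia.
    rewrite add0n.
    have /implyP H1 := HR (inord pR).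
    rewrite /rho /eR /xR; apply/eqP; apply: tg_heq; apply: H1.
    by rewrite inordK.
  + rewrite /pinL /psi /= /tupL.
    rewrite (_ : eL s ord0 :: _ = map (rho (eL s)) (iota 0 m.+2)); last by rewrite val_tupX rho0.
    rewrite (nth_map 0%N) ?size_iota; last by lia.
    rewrite nth_iota; last by lia.
    rewrite add0n.
    have /implyP H1 := HL (inord a).
    rewrite /rho /eL /xL; apply/eqP; apply: tg_heq; apply: H1.
    by rewrite inordK //; lia.
rewrite [X in X <= _](_ : _ = \sum_(z1 | pinR z1) \sum_(z2 | pinL z2) XR z1 * XL z2); last first.
  by rewrite pair_big_dep.
under eq_bigr => z1 _ do rewrite -mulr_sumr.
rewrite -mulr_suml.
have BR : \sum_(z1 | pinR z1) XR z1 <= 12 * 12 ^+ pR * 1 ^+ (m.+1 - pR) * 1.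
  have -> : \sum_(z1 | pinR z1) XR z1 =
      \sum_y \sum_(t : (m.+1).-tuple U | nth y (y :: t) pR == xR) hR y * W G (fun _ => 1) y t.
    by rewrite pair_big_dep.
  apply: (@chain_bound R U G (fun _ => 1) 1 12 1) => //; try solve [ exact: G_ge0 | move=> *; exact: ler01 | exact: G_row | exact: G_col | exact: hR_ge0 | exact: hR_le | rewrite /pR; lia | move=> *; exact: G_ge0 | exact: eLf_ge0 | exact: eLf_le | move=> *; exact: G_col | move=> *; exact: G_row | lia | exact: ler01].
have BL : \sum_(z2 | pinL z2) XL z2 <= 1 * 1 ^+ a * 12 ^+ (m.+1 - a) * 1.
  have -> : \sum_(z2 | pinL z2) XL z2 =
      \sum_y \sum_(t : (m.+1).-tuple U | nth y (y :: t) a == xL) (fun _ => 1) y * W GT eLf y t.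
    by rewrite pair_big_dep.
  apply: (@chain_bound R U GT eLf 12 1 1) => //; try solve [ exact: G_ge0 | move=> *; exact: ler01 | exact: G_row | exact: G_col | exact: hR_ge0 | exact: hR_le | rewrite /pR; lia | move=> *; exact: G_ge0 | exact: eLf_ge0 | exact: eLf_le | move=> *; exact: G_col | move=> *; exact: G_row | lia | exact: ler01].
have XR0 z : 0 <= XR z.
  apply: mulr_ge0; first exact: hR_ge0.
  apply: W_ge0; [exact: G_ge0 | move=> *; exact: ler01].
have XL0 z : 0 <= XL z.
  apply: mulr_ge0; first exact: ler01.
  apply: W_ge0; [move=> *; exact: G_ge0 | exact: eLf_ge0].
apply: (le_trans (ler_pM _ _ BR BL)).
- by rewrite sumr_ge0.
- by rewrite sumr_ge0.
rewrite !expr1n !mulr1 !mul1r -exprS -exprD.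
have -> : ((pR.+1 + (m.+1 - a)) = 2 * m.+2 - b - a - 1)%N by rewrite /pR; lia.
by [].
Qed.
End Main.

Theorem lemma6p1 (R : realFieldType) (Q : nat -> finType)
  (coll : forall m : nat, Q m.+1 -> Q m -> bool)
  (g : forall m : nat, Q m.+1 -> Q m -> R)
  (cardQ : forall k : nat,
     #|Q k| = (2 * 3 ^ k * (2 * k)`! %/ (k`! * (k.+2)`!))%N)
  (g_ge0 : forall m (q : Q m.+1) (q' : Q m), 0 <= g m q q')
  (g_coll : forall m (q : Q m.+1) (q' : Q m), g m q q' != 0 -> coll m q q')
  (g_row : forall m (q : Q m.+1), \sum_(q' : Q m) g m q q' = 1)
  (g_col : forall m (q' : Q m),
     \sum_(q : Q m.+1) g m q q' = #|Q m.+1|%:R / #|Q m|%:R)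
  (n a b : nat) (hn : (2 <= n)%N) (ha : (0 < a)%N) (hb : (0 < b)%N)
  (han : (a < n - 1)%N) (hbn : (b < n)%N) (l : Q a) (r : Q b) :
  \sum_(q : Q n) \sum_(q' : Q n.-1)
     \sum_(s : QSeq Q n | [forall i : 'I_n, (val i == a) ==> heq (s i).1 l]
                          && [forall i : 'I_n, (val i == n - b - 1)%N ==> heq (s i).2 r])
        Pqq g q q' s
  <= (12%:R : R) ^+ (2 * n - b - a - 1).
Proof.
have ratio : forall k, (#|Q k.+1| <= 12 * #|Q k|)%N.
  by move=> k; rewrite !cardQ; exact: X_ratio.
case: n hn han hbn => [|[|m]] // _ han hbn.
apply: (@main_bound R Q g g_ge0 g_row g_col ratio m a b l r ha hb); lia.
Qed.
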